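(* For every $D>0$ there exists $\delta=\delta(D)>0$ such that the following holds. For any integers $K,N\geq 8$ and any measurable quasi-periodic function $G$ on $\mathbb{R}^2$ with $|G|\geq D$ almost everywhere, there exists a measurable set $S\subseteq[0,1]^2$ of Lebesgue measure at least $1/(NK)$ such that every $(x,y)\in S$ satisfies $$|G(x+1/K,y)-G(x,y)|\geq\delta\quad\text{or}\quad |G(x,y+1/N)-G(x,y)|\geq\delta.$$
   Context: A function $G$ on $\mathbb{R}^2$ is quasi-periodic if $G(x,y+1)=G(x,y)$ and $G(x+1,y)=e^{2\pi i y}G(x,y)$ for all $(x,y)\in\mathbb{R}^2$. *)

(* Defs.v *)
From Stdlib Require Import Reals Lra.
Open Scope R_scope.

Definition Cpx := (R * R)%type.
Definition Cmul (z w : Cpx) : Cpx :=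
  (fst z * fst w - snd z * snd w, fst z * snd w + snd z * fst w).
Definition Csub (z w : Cpx) : Cpx := (fst z - fst w, snd z - snd w).
Definition Cnorm (z : Cpx) : R := sqrt (fst z ^ 2 + snd z ^ 2).
Definition Cexpi (t : R) : Cpx := (cos t, sin t).

Definition quasi_periodic (G : R -> R -> Cpx) : Prop :=
  forall x y, G x (y + 1) = G x y /\ G (x + 1) y = Cmul (Cexpi (2 * PI * y)) (G x y).

Definition set2 := R -> R -> Prop.

Record rect := Rect { ra1 : R; rb1 : R; ra2 : R; rb2 : R }.
Definition in_rect (r : rect) (x y : R) : Prop :=
  ra1 r <= x <= rb1 r /\ ra2 r <= y <= rb2 r.
Definition area (r : rect) : R :=
  Rmax 0 (rb1 r - ra1 r) * Rmax 0 (rb2 r - ra2 r).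

Definition covers (c : nat -> rect) (A : set2) : Prop :=
  forall x y, A x y -> exists k, in_rect (c k) x y.

(* Lebesgue outer measure lambda*(A) = inf over countable rectangle covers
   of the sum of areas.  We express  lambda*(A) <= v  and  lambda*(A) >= v. *)
Definition outer_le (A : set2) (v : R) : Prop :=
  forall eps, 0 < eps -> exists c : nat -> rect,
    covers c A /\ forall n, sum_f_R0 (fun k => area (c k)) n <= v + eps.

Definition outer_ge (A : set2) (v : R) : Prop :=
  forall c : nat -> rect, covers c A ->
    forall eps, 0 < eps -> exists n, v - eps < sum_f_R0 (fun k => area (c k)) n.

Definition null_set (A : set2) : Prop := outer_le A 0.

Definition open2 (U : set2) : Prop :=
  forall x y, U x y -> exists r, 0 < r /\
    forall x' y', (x' - x) ^ 2 + (y' - y) ^ 2 < r ^ 2 -> U x' y'.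

Definition measurable2 (A : set2) : Prop :=
  forall eps, 0 < eps -> exists U, open2 U /\ (forall x y, A x y -> U x y) /\
    outer_le (fun x y => U x y /\ ~ A x y) eps.

Definition measurable_fun (G : R -> R -> Cpx) : Prop :=
  forall V : set2, open2 V -> measurable2 (fun x y => V (fst (G x y)) (snd (G x y))).

(* Main.v *)
Require Import Defs.
From Stdlib Require Import Reals Lra Lia ZArith Cantor IndefiniteDescription Classical Permutation List Rtopology.
Open Scope R_scope.


Fixpoint rsum (f : nat -> R) (n : nat) : R :=
  match n with O => 0 | S n => rsum f n + f n end.

Lemma sum_rsum f n : sum_f_R0 f n = rsum f (S n).
Proof. induction n; simpl in *; [lra|rewrite IHn; reflexivity]. Qed.

Lemma rsum_ext f g n : (forall i, (i < n)%nat -> f i = g i) -> rsum f n = rsum g n.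
Proof. induction n; intros H; simpl; [lra|]. rewrite IHn, H; [lra|lia|intros; apply H; lia]. Qed.

Lemma rsum_le f g n : (forall i, (i < n)%nat -> f i <= g i) -> rsum f n <= rsum g n.
Proof. induction n; intros H; simpl; [lra|]. assert (f n <= g n) by (apply H; lia).
  assert (rsum f n <= rsum g n) by (apply IHn; intros; apply H; lia). lra. Qed.

Lemma rsum_ge0 f n : (forall i, (i < n)%nat -> 0 <= f i) -> 0 <= rsum f n.
Proof. intros H. replace 0 with (rsum (fun _ => 0) n). apply rsum_le; auto.
  induction n; simpl; auto. rewrite IHn; [lra|intros; apply H; lia]. Qed.

Lemma rsum_plus f g n : rsum (fun i => f i + g i) n = rsum f n + rsum g n.
Proof. induction n; simpl; lra. Qed.

Lemma rsum_scal c f n : rsum (fun i => c * f i) n = c * rsum f n.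
Proof. induction n; simpl; [ring|rewrite IHn; ring]. Qed.

Lemma rsum_const c n : rsum (fun _ => c) n = INR n * c.
Proof. induction n; simpl rsum; [simpl; ring|rewrite IHn, S_INR; ring]. Qed.

Lemma rsum_tele a n : rsum (fun i => a (S i) - a i) n = a n - a O.
Proof. induction n; simpl; [ring|rewrite IHn; ring]. Qed.

Lemma rsum_mono f n m : (forall i, 0 <= f i) -> (n <= m)%nat -> rsum f n <= rsum f m.
Proof. intros H Hle. induction Hle; simpl; [lra|]. specialize (H m). lra. Qed.

Lemma rsum_swap (f : nat -> nat -> R) n m :
  rsum (fun i => rsum (fun j => f i j) m) n = rsum (fun j => rsum (fun i => f i j) n) m.
Proof. induction n; simpl.
 - symmetry. induction m; simpl; [lra|rewrite IHm; lra].
 - rewrite IHn. rewrite <- rsum_plus. reflexivity. Qed.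

Lemma rsum_geom eps n : 0 <= eps -> rsum (fun i => eps / 2 ^ (S i)) n <= eps.
Proof. intros He. assert (H: rsum (fun i => eps / 2 ^ (S i)) n = eps - eps / 2 ^ n).
  { induction n; cbn [rsum]. simpl; field. rewrite IHn. simpl. field. apply pow_nonzero; lra. }
  rewrite H. assert (0 < 2 ^ n) by (apply pow_lt; lra).
  assert (0 <= eps / 2 ^ n) by (unfold Rdiv; apply Rmult_le_pos; [lra|left; apply Rinv_0_lt_compat; lra]). lra. Qed.

Definition lsum (f : nat * nat -> R) (l : list (nat * nat)) : R :=
  fold_right (fun p acc => f p + acc) 0 l.

Lemma lsum_app f l1 l2 : lsum f (l1 ++ l2) = lsum f l1 + lsum f l2.
Proof. induction l1; simpl; [lra|rewrite IHl1; lra]. Qed.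

Lemma lsum_perm f l1 l2 : Permutation l1 l2 -> lsum f l1 = lsum f l2.
Proof. induction 1; simpl; lra. Qed.

Lemma lsum_ge0 f l : (forall p, 0 <= f p) -> 0 <= lsum f l.
Proof. intros H; induction l; simpl; [lra|specialize (H a); lra]. Qed.

Lemma lsum_incl f l1 : (forall p, 0 <= f p) -> NoDup l1 ->
  forall l2, incl l1 l2 -> lsum f l1 <= lsum f l2.
Proof.
  intros Hf Hnd. induction Hnd as [|a l1 Ha Hnd IH]; intros l2 Hi.
  - simpl. apply lsum_ge0; auto.
  - assert (Hin : In a l2) by (apply Hi; left; auto).
    destruct (in_split _ _ Hin) as [u [v Huv]]. subst l2.
    rewrite (lsum_perm f _ _ (Permutation_sym (Permutation_middle u v a))).
    simpl. assert (lsum f l1 <= lsum f (u ++ v)); [|lra].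
    apply IH. intros x Hx. assert (Hx2 : In x (u ++ a :: v)) by (apply Hi; right; auto).
    apply in_app_or in Hx2. apply in_or_app. destruct Hx2 as [H|[H|H]]; auto.
    subst; contradiction.
Qed.

Lemma lsum_map_seq (g : nat -> nat * nat) f n :
  lsum f (map g (seq 0 n)) = rsum (fun k => f (g k)) n.
Proof.
  induction n; [reflexivity|]. rewrite seq_S, map_app, lsum_app, IHn. simpl. lra.
Qed.

Lemma lsum_prod f n m :
  lsum f (list_prod (seq 0 n) (seq 0 m)) = rsum (fun i => rsum (fun j => f (i, j)) m) n.
Proof.
  rewrite list_prod_as_flat_map. induction n; [reflexivity|].
  rewrite seq_S, flat_map_app, lsum_app, IHn. simpl. rewrite app_nil_r.
  rewrite (lsum_map_seq (pair n)). lra.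
Qed.

Lemma cantor_reindex (f : nat * nat -> R) M : (forall p, 0 <= f p) ->
  rsum (fun k => f (of_nat k)) M <= rsum (fun i => rsum (fun j => f (i, j)) M) M.
Proof.
  intros Hf. rewrite <- lsum_map_seq, <- lsum_prod. apply lsum_incl; auto.
  - apply NoDup_map_NoDup_ForallPairs; [|apply seq_NoDup].
    intros x y _ _ E. rewrite <- (cancel_to_of x), <- (cancel_to_of y), E. reflexivity.
  - intros [a b] Hin. apply in_map_iff in Hin. destruct Hin as [k [Hk Hin]].
    apply in_seq in Hin. pose proof (to_nat_non_decreasing a b) as Hnd.
    rewrite <- Hk, cancel_to_of in Hnd. apply in_prod; apply in_seq; lia.
Qed.

Definition emptyr := Rect 1 0 1 0.
Lemma area_emptyr : area emptyr = 0.
Proof. unfold area, emptyr; simpl. rewrite Rmax_left; lra. Qed.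

Lemma area_ge0 r : 0 <= area r.
Proof. unfold area. apply Rmult_le_pos; apply Rmax_l. Qed.

Lemma outer_le_mono (A B : set2) v : (forall x y, A x y -> B x y) -> outer_le B v -> outer_le A v.
Proof. intros H HB eps He. destruct (HB eps He) as [c [Hc Hs]]. exists c; split; auto.
  intros x y Hxy. apply Hc, H, Hxy. Qed.

Lemma outer_le_empty v : 0 <= v -> outer_le (fun _ _ => False) v.
Proof. intros Hv eps He. exists (fun _ => emptyr). split. intros x y [].
  intros n. rewrite sum_rsum. rewrite (rsum_ext _ (fun _ => 0)).
  rewrite rsum_const; lra. intros; apply area_emptyr. Qed.

Definition combine (c : nat -> nat -> rect) : nat -> rect :=
  fun k => c (fst (of_nat k)) (snd (of_nat k)).

Lemma combine_covers (c : nat -> nat -> rect) (A : nat -> set2) :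
  (forall n, covers (c n) (A n)) -> covers (combine c) (fun x y => exists n, A n x y).
Proof. intros H x y [n Hn]. destruct (H n x y Hn) as [m Hm]. exists (to_nat (n, m)).
  unfold combine. rewrite cancel_of_to. exact Hm. Qed.

Lemma combine_sum (c : nat -> nat -> rect) E :
  (forall M, rsum (fun i => rsum (fun j => area (c i j)) M) M <= E) ->
  forall M, rsum (fun k => area (combine c k)) M <= E.
Proof. intros H M. eapply Rle_trans; [|apply (H M)].
  apply (cantor_reindex (fun p => area (c (fst p) (snd p)))). intros; apply area_ge0. Qed.

Lemma outer_le_Union (A : nat -> set2) (e : nat -> R) E :
  (forall n, outer_le (A n) (e n)) -> (forall M, rsum e M <= E) ->
  outer_le (fun x y => exists n, A n x y) E.
Proof.
  intros HA HE eps He.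
  assert (Hc : forall n, exists c, covers c (A n) /\
     forall m, sum_f_R0 (fun k => area (c k)) m <= e n + eps / 2 ^ (S n)).
  { intros n. apply HA. apply Rdiv_lt_0_compat; [lra|apply pow_lt; lra]. }
  apply functional_choice in Hc. destruct Hc as [c Hc].
  exists (combine c). split.
  - apply combine_covers. intros n; apply Hc.
  - intros m. rewrite sum_rsum. apply combine_sum. intros M.
    destruct M as [|M]. simpl. pose proof (HE O). simpl in *. lra.
    eapply Rle_trans. apply (rsum_le _ (fun i => e i + eps / 2 ^ S i)). intros i _.
    rewrite <- sum_rsum. apply (proj2 (Hc i)).
    rewrite rsum_plus. pose proof (HE (S M)). pose proof (rsum_geom eps (S M)). lra.
Qed.

Definition seq2 {T} (a b d : T) : nat -> T :=
  fun n => match n with O => a | 1%nat => b | _ => d end.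

Lemma outer_le_union2 (A B : set2) va vb : 0 <= va -> 0 <= vb ->
  outer_le A va -> outer_le B vb -> outer_le (fun x y => A x y \/ B x y) (va + vb).
Proof.
  intros Ha Hb HA HB. eapply outer_le_mono.
  2:{ apply (outer_le_Union (seq2 A B (fun _ _ => False)) (seq2 va vb 0)).
      - intros [|[|n]]; simpl; auto. apply outer_le_empty; lra.
      - intros M. destruct M as [|[|M]]; simpl; try lra.
        induction M; simpl in *; lra. }
  intros x y [H|H]; [exists O|exists 1%nat]; exact H.
Qed.

Definition shiftr (a b : R) (r : rect) : rect :=
  Rect (ra1 r - a) (rb1 r - a) (ra2 r - b) (rb2 r - b).
Lemma area_shiftr a b r : area (shiftr a b r) = area r.
Proof. unfold area, shiftr; simpl. replace (rb1 r - a - (ra1 r - a)) with (rb1 r - ra1 r) by ring.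
  replace (rb2 r - b - (ra2 r - b)) with (rb2 r - ra2 r) by ring. reflexivity. Qed.

Lemma outer_le_shift (A : set2) a b v : outer_le A v -> outer_le (fun x y => A (x + a) (y + b)) v.
Proof. intros HA eps He. destruct (HA eps He) as [c [Hc Hs]].
  exists (fun k => shiftr a b (c k)). split.
  - intros x y H. destruct (Hc _ _ H) as [k Hk]. exists k. unfold in_rect, shiftr in *; simpl. lra.
  - intros n. rewrite sum_rsum, (rsum_ext _ (fun k => area (c k))), <- sum_rsum; auto.
    intros; apply area_shiftr. Qed.

Lemma outer_le_ge0 A v : outer_le A v -> 0 <= v.
Proof. intros H. apply Rnot_lt_le. intros Hv.
  destruct (H (- v / 2)) as [c [_ Hs]]. lra. specialize (Hs O). simpl in Hs.
  pose proof (area_ge0 (c O)). lra. Qed.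

Lemma meas_ext (A B : set2) : (forall x y, A x y <-> B x y) -> measurable2 A -> measurable2 B.
Proof. intros H HA eps He. destruct (HA eps He) as [U [HU [HAU Hl]]]. exists U. split; auto.
  split. intros x y Hb; apply HAU, H, Hb.
  eapply outer_le_mono; [|exact Hl]. intros x y [H1 H2]. split; auto. rewrite H; auto. Qed.

Lemma meas_open U : open2 U -> measurable2 U.
Proof. intros HU eps He. exists U. split; auto. split; auto.
  eapply outer_le_mono; [|apply outer_le_empty; lra]. intros x y [H1 H2]; auto. Qed.

Lemma meas_empty : measurable2 (fun _ _ => False).
Proof. apply meas_open. intros x y []. Qed.

Lemma meas_cond (P : Prop) (A : set2) : measurable2 A -> measurable2 (fun x y => P /\ A x y).
Proof. intros HA. destruct (classic P) as [p|np].
  - eapply meas_ext; [|exact HA]. intros; tauto.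
  - eapply meas_ext; [|exact meas_empty]. intros; tauto. Qed.

Lemma meas_Union (A : nat -> set2) : (forall n, measurable2 (A n)) ->
  measurable2 (fun x y => exists n, A n x y).
Proof.
  intros HA eps He.
  assert (Hc : forall n, exists U, open2 U /\ (forall x y, A n x y -> U x y) /\
     outer_le (fun x y => U x y /\ ~ A n x y) (eps / 2 ^ (S n))).
  { intros n. apply HA. apply Rdiv_lt_0_compat; [lra|apply pow_lt; lra]. }
  apply functional_choice in Hc. destruct Hc as [U Hc].
  exists (fun x y => exists n, U n x y). split; [|split].
  - intros x y [n Hn]. destruct (proj1 (Hc n) x y Hn) as [r [Hr Hb]].
    exists r; split; auto. intros; exists n; auto.
  - intros x y [n Hn]. exists n. apply (proj1 (proj2 (Hc n))); auto.
  - eapply outer_le_mono.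
    2:{ apply (outer_le_Union (fun n x y => U n x y /\ ~ A n x y) (fun n => eps / 2 ^ S n)).
        intros n; apply Hc. intros M; apply rsum_geom; lra. }
    intros x y [[n Hn] Hna]. exists n. split; auto. intros Ha. apply Hna. exists n; auto.
Qed.

Lemma meas_union2 A B : measurable2 A -> measurable2 B -> measurable2 (fun x y => A x y \/ B x y).
Proof. intros HA HB. eapply meas_ext.
  2:{ apply (meas_Union (seq2 A B (fun _ _ => False))). intros [|[|n]]; simpl; auto. apply meas_empty. }
  intros x y; split. intros [[|[|n]] H]; simpl in H; tauto.
  intros [H|H]; [exists O|exists 1%nat]; exact H. Qed.

Lemma meas_inter2 A B : measurable2 A -> measurable2 B -> measurable2 (fun x y => A x y /\ B x y).
Proof. intros HA HB eps He.
  destruct (HA (eps/2)) as [U [HU [HAU Hl1]]]; [lra|].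
  destruct (HB (eps/2)) as [V [HV [HBV Hl2]]]; [lra|].
  exists (fun x y => U x y /\ V x y). split; [|split].
  - intros x y [Hu Hv]. destruct (HU x y Hu) as [r1 [Hr1 H1]]. destruct (HV x y Hv) as [r2 [Hr2 H2]].
    exists (Rmin r1 r2). split. apply Rmin_pos; auto.
    intros x' y' Hd. assert (Rmin r1 r2 <= r1) by apply Rmin_l. assert (Rmin r1 r2 <= r2) by apply Rmin_r.
    assert (0 < Rmin r1 r2) by (apply Rmin_pos; auto).
    split; [apply H1|apply H2]; nra.
  - intros x y [Ha Hb]; split; auto.
  - assert (Hz: 0 <= eps/2) by lra. replace eps with (eps/2 + eps/2) by field. eapply outer_le_mono; [|apply (outer_le_union2 _ _ _ _ Hz Hz Hl1 Hl2)].
    intros x y [[Hu Hv] Hn]. destruct (classic (A x y)) as [Ha|Ha].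
    right; split; auto. left; split; auto.
Qed.

Lemma meas_shift (A : set2) a b : measurable2 A -> measurable2 (fun x y => A (x + a) (y + b)).
Proof. intros HA eps He. destruct (HA eps He) as [U [HU [HAU Hl]]].
  exists (fun x y => U (x + a) (y + b)). split; [|split].
  - intros x y Hu. destruct (HU _ _ Hu) as [r [Hr H]]. exists r; split; auto.
    intros x' y' Hd. apply H. replace (x' + a - (x + a)) with (x' - x) by ring.
    replace (y' + b - (y + b)) with (y' - y) by ring. auto.
  - intros; auto.
  - apply (outer_le_shift (fun x y => U x y /\ ~ A x y)); auto. Qed.

Lemma meas_UnionZ (A : Z -> set2) : (forall z, measurable2 (A z)) ->
  measurable2 (fun x y => exists z, A z x y).
Proof. intros H. eapply meas_ext.
  2:{ apply (meas_Union (fun n x y => A (Z.of_nat n) x y \/ A (- Z.of_nat n)%Z x y)).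
      intros n; apply meas_union2; auto. }
  intros x y; split. intros [n [Hn|Hn]]; eexists; eauto.
  intros [z Hz]. destruct (Z.le_gt_cases 0 z).
  - exists (Z.to_nat z). left. rewrite Z2Nat.id; auto.
  - exists (Z.to_nat (- z)). right. rewrite Z2Nat.id; [|lia]. rewrite Z.opp_involutive; auto.
Qed.

Lemma outer_le_rect (A : set2) r : (forall x y, A x y -> in_rect r x y) -> outer_le A (area r).
Proof. intros H eps He. exists (fun k => match k with O => r | _ => emptyr end). split.
  - intros x y Hxy. exists O. auto.
  - intros n. rewrite sum_rsum. induction n. simpl. lra. cbn [rsum] in *. rewrite area_emptyr. lra. Qed.

Lemma open_box a1 b1 a2 b2 : open2 (fun u v => a1 < u < b1 /\ a2 < v < b2).
Proof. intros x y H. exists (Rmin (Rmin (x - a1) (b1 - x)) (Rmin (y - a2) (b2 - y))).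
  assert (Hp : 0 < Rmin (Rmin (x - a1) (b1 - x)) (Rmin (y - a2) (b2 - y))).
  { repeat apply Rmin_pos; lra. }
  split; auto. intros x' y' Hd. set (r := Rmin (Rmin (x - a1) (b1 - x)) (Rmin (y - a2) (b2 - y))) in *.
  assert (r <= x - a1 /\ r <= b1 - x /\ r <= y - a2 /\ r <= b2 - y) as [? [? [? ?]]].
  { unfold r, Rmin; repeat destruct Rle_dec; lra. }
  pose proof (pow2_ge_0 (x'-x)). pose proof (pow2_ge_0 (y'-y)).
  assert (Hx : (x' - x) ^ 2 < r ^ 2) by lra. assert (Hy : (y' - y) ^ 2 < r ^ 2) by lra.
  assert (x' - x < r) by (apply Rnot_le_lt; intro; nra).
  assert (x - x' < r) by (apply Rnot_le_lt; intro; nra).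
  assert (y' - y < r) by (apply Rnot_le_lt; intro; nra).
  assert (y - y' < r) by (apply Rnot_le_lt; intro; nra).
  lra.
Qed.

Lemma abs_le_bnd x e : Rabs x <= e -> -e <= x <= e.
Proof. unfold Rabs; destruct Rcase_abs; lra. Qed.

Lemma Cnorm_ge0 z : 0 <= Cnorm z.
Proof. apply sqrt_pos. Qed.

Lemma Cnorm_sq z : Cnorm z ^ 2 = fst z ^ 2 + snd z ^ 2.
Proof. unfold Cnorm. rewrite pow2_sqrt; auto. pose proof (pow2_ge_0 (fst z)); pose proof (pow2_ge_0 (snd z)); lra. Qed.

Lemma le_from_sq a b : 0 <= b -> a ^ 2 <= b ^ 2 -> a <= b.
Proof. intros Hb H. apply Rnot_lt_le. intros Hl. nra. Qed.

Lemma Cnorm_le_abs z : Cnorm z <= Rabs (fst z) + Rabs (snd z).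
Proof. apply le_from_sq. pose proof (Rabs_pos (fst z)); pose proof (Rabs_pos (snd z)); lra.
  rewrite Cnorm_sq. pose proof (Rabs_pos (fst z)); pose proof (Rabs_pos (snd z)).
  rewrite <- (pow2_abs (fst z)), <- (pow2_abs (snd z)).
  set (p := Rabs (fst z)) in *. set (q := Rabs (snd z)) in *. nra. Qed.

Lemma Cauchy2 a b c d : a * c + b * d <= Cnorm (a, b) * Cnorm (c, d).
Proof. destruct (Rle_lt_dec (a * c + b * d) 0).
  - pose proof (Cnorm_ge0 (a,b)); pose proof (Cnorm_ge0 (c,d)); nra.
  - apply le_from_sq. apply Rmult_le_pos; apply Cnorm_ge0.
    rewrite Rpow_mult_distr, !Cnorm_sq. simpl. pose proof (pow2_ge_0 (a*d-b*c)). nra. Qed.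

Lemma Cnorm_tri u1 u2 v1 v2 : Cnorm (u1 + v1, u2 + v2) <= Cnorm (u1, u2) + Cnorm (v1, v2).
Proof. apply le_from_sq. pose proof (Cnorm_ge0 (u1,u2)); pose proof (Cnorm_ge0 (v1,v2)); lra.
  rewrite Cnorm_sq. simpl fst; simpl snd. pose proof (Cauchy2 u1 u2 v1 v2).
  replace ((Cnorm (u1, u2) + Cnorm (v1, v2)) ^ 2) with
    (Cnorm (u1, u2) ^ 2 + Cnorm (v1, v2) ^ 2 + 2 * (Cnorm (u1, u2) * Cnorm (v1, v2))) by ring.
  rewrite !Cnorm_sq. simpl. nra. Qed.

Lemma Cnorm_close p q : Cnorm p <= Cnorm q + Rabs (fst p - fst q) + Rabs (snd p - snd q).
Proof. destruct p as [p1 p2], q as [q1 q2]. simpl.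
  pose proof (Cnorm_tri q1 q2 (p1 - q1) (p2 - q2)).
  replace (q1 + (p1 - q1)) with p1 in H by ring. replace (q2 + (p2 - q2)) with p2 in H by ring.
  pose proof (Cnorm_le_abs (p1 - q1, p2 - q2)). simpl in *. lra. Qed.

Definition Sq (m : nat) (a b : Z) : set2 := fun u v =>
  IZR a / INR (S m) - 2 / INR (S m) < u < IZR a / INR (S m) + 2 / INR (S m) /\
  IZR b / INR (S m) - 2 / INR (S m) < v < IZR b / INR (S m) + 2 / INR (S m).

Lemma Dset_meas (G : R -> R -> Cpx) h k delta : measurable_fun G ->
  measurable2 (fun x y => Cnorm (Csub (G (x + h) (y + k)) (G x y)) > delta).
Proof.
  intros HG.
  set (P := fun m a b c d => forall w1 w2 u1 u2, Sq m a b w1 w2 -> Sq m c d u1 u2 ->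
        Cnorm (Csub (w1, w2) (u1, u2)) > delta).
  eapply meas_ext.
  2:{ apply (meas_Union (fun m x y => exists a b c d, P m a b c d /\
        (Sq m a b (fst (G (x + h) (y + k))) (snd (G (x + h) (y + k))) /\
         Sq m c d (fst (G x y)) (snd (G x y))))).
      intros m. apply meas_UnionZ; intros a. apply meas_UnionZ; intros b.
      apply meas_UnionZ; intros c. apply meas_UnionZ; intros d.
      apply meas_cond. apply meas_inter2.
      - apply (meas_shift (fun x y => Sq m a b (fst (G x y)) (snd (G x y)))). apply HG. apply open_box.
      - apply HG. apply open_box. }
  intros x y. split.
  - intros [m [a [b [c [d [HP [H1 H2]]]]]]]. specialize (HP _ _ _ _ H1 H2).
    destruct (G (x + h) (y + k)), (G x y). exact HP.
  - intros Hgt. set (w := G (x + h) (y + k)) in *. set (u := G x y) in *.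
    set (r := Cnorm (Csub w u) - delta). assert (Hr : 0 < r) by (unfold r; lra).
    destruct (archimed (12 / r)) as [Hup _].
    set (m := Z.to_nat (up (12 / r))).
    assert (HM : 12 / r < INR (S m)).
    { rewrite S_INR. unfold m. destruct (Z.le_gt_cases 0 (up (12/r))).
      rewrite INR_IZR_INZ, Z2Nat.id; auto. lra.
      assert (0 < 12 / r) by (apply Rdiv_lt_0_compat; lra).
      assert (Hz0 : IZR 0 < IZR (up (12 / r))) by lra. apply lt_IZR in Hz0; lia. }
    set (M := INR (S m)) in *.
    assert (HM0 : 0 < M) by (unfold M; apply lt_0_INR; lia).
    assert (HMr : 12 / M < r).
    { apply (Rmult_lt_reg_r (M / r)). apply Rdiv_lt_0_compat; lra.
      replace (12 / M * (M / r)) with (12 / r) by (field; lra). replace (r * (M / r)) with M by (field; lra). lra. }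
    assert (Hcoord : forall t, exists a : Z, IZR a / M - 2 / M < t < IZR a / M + 2 / M /\
                                         Rabs (IZR a / M - t) <= 1 / M).
    { intros t. destruct (archimed (M * t)) as [H1 H2]. exists (up (M * t)).
      assert (IZR (up (M * t)) / M - t <= 1 / M).
      { apply (Rmult_le_reg_r M); auto. replace ((IZR (up (M * t)) / M - t) * M) with (IZR (up (M * t)) - M * t) by (field; lra).
        replace (1 / M * M) with 1 by (field; lra). lra. }
      assert (t < IZR (up (M * t)) / M).
      { apply (Rmult_lt_reg_r M); auto. replace (IZR (up (M * t)) / M * M) with (IZR (up (M * t))) by (field; lra). lra. }
      assert (0 < 1 / M) by (apply Rdiv_lt_0_compat; lra).
      assert (0 < 2 / M) by (apply Rdiv_lt_0_compat; lra).
      assert (1 / M < 2 / M) by (unfold Rdiv; apply Rmult_lt_compat_r; [apply Rinv_0_lt_compat|]; lra).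
      split. lra. rewrite Rabs_right; lra. }
    destruct (Hcoord (fst w)) as [a [Ha1 Ha2]]. destruct (Hcoord (snd w)) as [b [Hb1 Hb2]].
    destruct (Hcoord (fst u)) as [c [Hc1 Hc2]]. destruct (Hcoord (snd u)) as [d [Hd1 Hd2]].
    exists m, a, b, c, d. split; [|split; split; fold M; auto].
    intros w1 w2 u1 u2 [H1 H2] [H3 H4]. fold M in H1, H2, H3, H4.
    pose proof (Cnorm_close (Csub w u) (Csub (w1, w2) (u1, u2))) as Hcl.
    unfold Csub in *; simpl fst in *; simpl snd in *.
    assert (Rabs (fst w - fst u - (w1 - u1)) + Rabs (snd w - snd u - (w2 - u2)) < 12 / M).
    { replace (12 / M) with (6 / M + 6 / M) by (field; lra).
      assert (E2 : 2 / M = 2 * (1 / M)) by (field; lra). assert (E6 : 6 / M = 6 * (1 / M)) by (field; lra).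
      rewrite E2 in *. rewrite E6. set (e := 1 / M) in *.
      set (A := IZR a / M) in *. set (B := IZR b / M) in *. set (C := IZR c / M) in *. set (D := IZR d / M) in *.
      apply abs_le_bnd in Ha2. apply abs_le_bnd in Hb2. apply abs_le_bnd in Hc2. apply abs_le_bnd in Hd2.
      apply Rplus_lt_compat; unfold Rabs; repeat destruct Rcase_abs; lra. }
    unfold r in HMr. lra.
Qed.

Lemma outer_le_weaken A v w : outer_le A v -> v <= w -> outer_le A w.
Proof. intros H Hvw eps He. destruct (H eps He) as [c [Hc Hs]]. exists c; split; auto.
  intros n; specialize (Hs n); lra. Qed.

Definition Q01 : set2 := fun x y => (0 <= x < 1) /\ (0 <= y < 1).

Lemma meas_Q01 : measurable2 Q01.
Proof. intros eps He. set (t := Rmin 1 (eps / 4)).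
  assert (Ht : 0 < t) by (apply Rmin_pos; lra).
  assert (Ht1 : t <= 1) by apply Rmin_l. assert (Ht2 : t <= eps / 4) by apply Rmin_r.
  exists (fun u v => -t < u < 1 /\ -t < v < 1). split; [apply open_box|split].
  - intros x y [[? ?] [? ?]]; lra.
  - eapply outer_le_weaken.
    eapply outer_le_mono; [|apply (outer_le_union2 (in_rect (Rect (-t) 0 (-t) 1)) (in_rect (Rect (-t) 1 (-t) 0)) _ _ (area_ge0 (Rect (-t) 0 (-t) 1)) (area_ge0 (Rect (-t) 1 (-t) 0)))];
      [| apply outer_le_rect; intros x y H; exact H | apply outer_le_rect; intros x y H; exact H].
    intros x y [[[? ?] [? ?]] Hn]. unfold in_rect; simpl.
    destruct (Rlt_le_dec x 0); [left; lra|]. destruct (Rlt_le_dec y 0); [right; lra|].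
    exfalso; apply Hn; split; split; lra.
    unfold area; simpl. rewrite !Rmax_right by lra. nra.
Qed.

Definition indf (al be t : R) : R :=
  if Rle_dec al t then if Rle_dec t be then 1 else 0 else 0.

Lemma ind_ge0 al be t : 0 <= indf al be t.
Proof. unfold indf; repeat destruct Rle_dec; lra. Qed.
Lemma ind_le1 al be t : indf al be t <= 1.
Proof. unfold indf; repeat destruct Rle_dec; lra. Qed.
Lemma ind_1 al be t : al <= t <= be -> indf al be t = 1.
Proof. unfold indf; repeat destruct Rle_dec; lra. Qed.

Lemma count_bound al be a h M : 0 < h ->
  rsum (fun i => indf al be (a + (INR i + /2) * h)) M <= Rmax 0 ((be - al) / h + 1).
Proof.
  intros Hh.
  assert (Hc : rsum (fun i => indf al be (a + (INR i + /2) * h)) M <=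
               Rmax 0 ((Rmin be (a + (INR M - /2) * h) - al) / h + 1)).
  { induction M.
    - simpl. apply Rmax_l.
    - cbn [rsum]. rewrite S_INR.
      replace (a + (INR M + 1 - / 2) * h) with (a + (INR M + / 2) * h) by field.
      unfold indf at 2. destruct (Rle_dec al (a + (INR M + / 2) * h)) as [H1|H1].
      + destruct (Rle_dec (a + (INR M + / 2) * h) be) as [H2|H2].
        * rewrite (Rmin_right be) by lra.
          assert (Rmax 0 ((Rmin be (a + (INR M - / 2) * h) - al) / h + 1) <= (a + (INR M + / 2) * h - al) / h).
          { apply Rmax_lub. apply Rmult_le_pos; [lra|left; apply Rinv_0_lt_compat; lra].
            assert (Rmin be (a + (INR M - / 2) * h) <= a + (INR M - / 2) * h) by apply Rmin_r.
            replace ((a + (INR M + / 2) * h - al) / h) with ((a + (INR M - / 2) * h - al) / h + 1) by (field; lra).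
            apply Rplus_le_compat_r. unfold Rdiv. apply Rmult_le_compat_r; [left; apply Rinv_0_lt_compat; lra|lra]. }
          rewrite Rmax_right. lra.
          assert (0 <= (a + (INR M + / 2) * h - al) / h) by (apply Rmult_le_pos; [lra|left; apply Rinv_0_lt_compat; lra]). lra.
        * eapply Rle_trans. rewrite Rplus_0_r. apply IHM. apply Rle_max_compat_l.
          apply Rplus_le_compat_r. unfold Rdiv. apply Rmult_le_compat_r; [left; apply Rinv_0_lt_compat; lra|].
          apply Rplus_le_compat_r. unfold Rmin. repeat destruct Rle_dec; lra.
      + eapply Rle_trans. rewrite Rplus_0_r. apply IHM. apply Rle_max_compat_l.
        apply Rplus_le_compat_r. unfold Rdiv. apply Rmult_le_compat_r; [left; apply Rinv_0_lt_compat; lra|].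
        apply Rplus_le_compat_r. unfold Rmin. repeat destruct Rle_dec; lra. }
  eapply Rle_trans; [exact Hc|]. apply Rle_max_compat_l. apply Rplus_le_compat_r.
  unfold Rdiv. apply Rmult_le_compat_r; [left; apply Rinv_0_lt_compat; lra|].
  assert (Rmin be (a + (INR M - / 2) * h) <= be) by apply Rmin_l. lra.
Qed.

Lemma rsum_ge_term f n k : (forall i, 0 <= f i) -> (k < n)%nat -> f k <= rsum f n.
Proof. intros Hf Hk. induction n. lia. cbn [rsum].
  destruct (Nat.eq_dec k n). subst. pose proof (rsum_ge0 f n (fun i _ => Hf i)). lra.
  pose proof (IHn ltac:(lia)). specialize (Hf n). lra. Qed.

Lemma rsum_mul_r f c n : rsum (fun i => f i * c) n = rsum f n * c.
Proof. rewrite (rsum_ext _ (fun i => c * f i)). rewrite rsum_scal. ring. intros; ring. Qed.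

Lemma finite_cover_area a1 b1 a2 b2 (d : nat -> rect) n : a1 <= b1 -> a2 <= b2 ->
  (forall x y, a1 <= x <= b1 -> a2 <= y <= b2 -> exists k, (k < n)%nat /\ in_rect (d k) x y) ->
  (b1 - a1) * (b2 - a2) <= rsum (fun k => area (d k)) n.
Proof.
  intros H1 H2 Hcov.
  assert (Hs0 : 0 <= rsum (fun k => area (d k)) n) by (apply rsum_ge0; intros; apply area_ge0).
  destruct (Req_dec a1 b1) as [E|E1]. subst. lra.
  destruct (Req_dec a2 b2) as [E|E2]. subst. lra.
  apply Rnot_lt_le. intros Hgt.
  set (g := (b1 - a1) * (b2 - a2) - rsum (fun k => area (d k)) n).
  assert (Hg : 0 < g) by (unfold g; lra).
  set (L1 := fun k => Rmax 0 (rb1 (d k) - ra1 (d k))).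
  set (L2 := fun k => Rmax 0 (rb2 (d k) - ra2 (d k))).
  assert (HL1 : forall k, 0 <= L1 k) by (intros; apply Rmax_l).
  assert (HL2 : forall k, 0 <= L2 k) by (intros; apply Rmax_l).
  set (SL1 := rsum L1 n). set (SL2 := rsum L2 n).
  assert (0 <= SL1) by (apply rsum_ge0; auto). assert (0 <= SL2) by (apply rsum_ge0; auto).
  set (E := (b1 - a1) * SL2 + (b2 - a2) * SL1 + INR n * ((b1 - a1) * (b2 - a2))).
  assert (HE : 0 <= E).
  { unfold E. pose proof (pos_INR n). assert (0 <= (b1 - a1) * (b2 - a2)) by nra. nra. }
  destruct (archimed (E / g)) as [Hup _].
  set (M := S (Z.to_nat (up (E / g)))).
  assert (HM : E / g < INR M).
  { unfold M. rewrite S_INR. destruct (Z.le_gt_cases 0 (up (E / g))).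
    rewrite INR_IZR_INZ, Z2Nat.id; auto. lra.
    simpl. assert (0 <= E / g) by (apply Rmult_le_pos; [lra|left; apply Rinv_0_lt_compat; lra]).
    assert (Hz0 : IZR (-1) < IZR (up (E / g))) by lra. apply lt_IZR in Hz0. lia. }
  assert (HM1 : 1 <= INR M) by (unfold M; rewrite S_INR; pose proof (pos_INR (Z.to_nat (up (E / g)))); lra).
  set (h1 := (b1 - a1) / INR M). set (h2 := (b2 - a2) / INR M).
  assert (Hh1 : 0 < h1) by (apply Rdiv_lt_0_compat; lra).
  assert (Hh2 : 0 < h2) by (apply Rdiv_lt_0_compat; lra).
  set (c1 := fun k i => indf (ra1 (d k)) (rb1 (d k)) (a1 + (INR i + /2) * h1)).
  set (c2 := fun k j => indf (ra2 (d k)) (rb2 (d k)) (a2 + (INR j + /2) * h2)).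
  assert (HA : forall i j, (i < M)%nat -> (j < M)%nat -> 1 <= rsum (fun k => c1 k i * c2 k j) n).
  { intros i j Hi Hj.
    assert (Hi' : INR i + 1 <= INR M) by (rewrite <- S_INR; apply le_INR; lia).
    assert (Hj' : INR j + 1 <= INR M) by (rewrite <- S_INR; apply le_INR; lia).
    pose proof (pos_INR i). pose proof (pos_INR j).
    assert (Ex : a1 <= a1 + (INR i + /2) * h1 <= b1).
    { split. assert (0 <= (INR i + /2) * h1) by (apply Rmult_le_pos; lra). lra.
      assert ((INR i + /2) * h1 <= INR M * h1) by (apply Rmult_le_compat_r; lra).
      unfold h1 in *. replace (INR M * ((b1 - a1) / INR M)) with (b1 - a1) in * by (field; lra). lra. }
    assert (Ey : a2 <= a2 + (INR j + /2) * h2 <= b2).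
    { split. assert (0 <= (INR j + /2) * h2) by (apply Rmult_le_pos; lra). lra.
      assert ((INR j + /2) * h2 <= INR M * h2) by (apply Rmult_le_compat_r; lra).
      unfold h2 in *. replace (INR M * ((b2 - a2) / INR M)) with (b2 - a2) in * by (field; lra). lra. }
    destruct (Hcov _ _ Ex Ey) as [k [Hk Hin]].
    eapply Rle_trans; [|apply (rsum_ge_term _ _ k)]; auto.
    unfold c1, c2. unfold in_rect in Hin. rewrite !ind_1; lra.
    intros; apply Rmult_le_pos; apply ind_ge0. }
  assert (HB : INR M * INR M <= rsum (fun k => (L1 k / h1 + 1) * (L2 k / h2 + 1)) n).
  { replace (INR M * INR M) with (rsum (fun i => rsum (fun j => 1) M) M)
      by (rewrite (rsum_ext _ (fun _ => INR M * 1)); [rewrite rsum_const; ring|intros; rewrite rsum_const; ring]).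
    eapply Rle_trans. apply rsum_le. intros i Hi. apply rsum_le. intros j Hj. apply (HA i j Hi Hj).
    rewrite (rsum_ext _ (fun i => rsum (fun k => rsum (fun j => c1 k i * c2 k j) M) n)).
    2:{ intros; apply rsum_swap. }
    rewrite rsum_swap. apply rsum_le. intros k Hk.
    rewrite (rsum_ext _ (fun i => c1 k i * rsum (fun j => c2 k j) M)).
    2:{ intros; apply rsum_scal. }
    rewrite rsum_mul_r.
    assert (B1 : rsum (c1 k) M <= L1 k / h1 + 1).
    { eapply Rle_trans. apply count_bound; auto. apply Rmax_lub.
      pose proof (HL1 k). assert (0 <= L1 k / h1) by (apply Rmult_le_pos; [lra|left; apply Rinv_0_lt_compat; lra]). lra.
      apply Rplus_le_compat_r. unfold Rdiv. apply Rmult_le_compat_r; [left; apply Rinv_0_lt_compat; lra|]. apply Rmax_r. }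
    assert (B2 : rsum (c2 k) M <= L2 k / h2 + 1).
    { eapply Rle_trans. apply count_bound; auto. apply Rmax_lub.
      pose proof (HL2 k). assert (0 <= L2 k / h2) by (apply Rmult_le_pos; [lra|left; apply Rinv_0_lt_compat; lra]). lra.
      apply Rplus_le_compat_r. unfold Rdiv. apply Rmult_le_compat_r; [left; apply Rinv_0_lt_compat; lra|]. apply Rmax_r. }
    apply Rmult_le_compat; auto; apply rsum_ge0; intros; apply ind_ge0. }
  assert (HC : rsum (fun k => (L1 k / h1 + 1) * (L2 k / h2 + 1)) n * (h1 * h2) =
               rsum (fun k => area (d k)) n + h2 * SL1 + h1 * SL2 + INR n * (h1 * h2)).
  { rewrite <- rsum_mul_r. unfold SL1, SL2. rewrite <- rsum_scal, <- (rsum_scal h1), <- rsum_const, <- !rsum_plus.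
    apply rsum_ext. intros k _. unfold area, L1, L2. field; lra. }
  assert (HBC : INR M * INR M * (h1 * h2) <= rsum (fun k => area (d k)) n + h2 * SL1 + h1 * SL2 + INR n * (h1 * h2)).
  { rewrite <- HC. apply Rmult_le_compat_r; [nra|exact HB]. }
  replace (INR M * INR M * (h1 * h2)) with ((b1 - a1) * (b2 - a2)) in HBC by (unfold h1, h2; field; lra).
  assert (Hx : h2 * SL1 + h1 * SL2 + INR n * (h1 * h2) <= E / INR M).
  { unfold h1, h2, E. pose proof (pos_INR n). assert (0 <= (b1 - a1) * (b2 - a2)) by nra.
    replace (INR n * ((b1 - a1) / INR M * ((b2 - a2) / INR M))) with (INR n * ((b1 - a1) * (b2 - a2)) / INR M * / INR M) by (field; lra).
    assert (INR n * ((b1 - a1) * (b2 - a2)) / INR M * / INR M <= INR n * ((b1 - a1) * (b2 - a2)) / INR M).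
    { rewrite <- (Rmult_1_r (INR n * ((b1 - a1) * (b2 - a2)) / INR M)) at 2. apply Rmult_le_compat_l.
      apply Rmult_le_pos; [nra|left; apply Rinv_0_lt_compat; lra].
      rewrite <- Rinv_1. apply Rinv_le_contravar; lra. }
    replace (((b1 - a1) * SL2 + (b2 - a2) * SL1 + INR n * ((b1 - a1) * (b2 - a2))) / INR M) with
      ((b2 - a2) / INR M * SL1 + (b1 - a1) / INR M * SL2 + INR n * ((b1 - a1) * (b2 - a2)) / INR M) by (field; lra).
    lra. }
  assert (E / INR M < g).
  { apply (Rmult_lt_reg_r (INR M / g)). apply Rdiv_lt_0_compat; lra.
    replace (E / INR M * (INR M / g)) with (E / g) by (field; lra).
    replace (g * (INR M / g)) with (INR M) by (field; lra). lra. }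
  unfold g in *. lra.
Qed.

Lemma compact_fin (a b : R) (F : R -> R -> Prop) : (forall t, open_set (F t)) ->
  (forall y, a <= y <= b -> exists t, F t y) ->
  exists l : list R, forall y, a <= y <= b -> exists t, In t l /\ F t y.
Proof.
  intros Ho Hc.
  set (fam := mkfamily (fun t => exists y, F t y) F (fun t H => H)).
  destruct (compact_P3 a b fam) as [D [Hcov [l Hl]]].
  { split. intros y Hy. apply Hc, Hy. intros t. apply Ho. }
  exists l. intros y Hy. destruct (Hcov y Hy) as [t [Ht HD]]. exists t. split; auto.
  apply Hl. split; auto. exists y; auto.
Qed.

Lemma list_bound (l : list R) : exists N : nat, forall t, In t l -> t < INR N.
Proof. induction l as [|a l [N HN]]. exists O; intros t [].
  destruct (archimed a) as [Hup _]. exists (N + Z.to_nat (up a))%nat. intros t [<-|Ht].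
  - rewrite plus_INR. pose proof (pos_INR N). destruct (Z.le_gt_cases 0 (up a)).
    rewrite (INR_IZR_INZ (Z.to_nat (up a))), Z2Nat.id; auto. lra.
    pose proof (pos_INR (Z.to_nat (up a))). assert (Hz : (up a <= -1)%Z) by lia. apply IZR_le in Hz. lra.
  - rewrite plus_INR. pose proof (pos_INR (Z.to_nat (up a))). specialize (HN t Ht). lra.
Qed.

Lemma list_bound_nat (l : list R) (f : R -> nat) : exists N, forall t, In t l -> (f t <= N)%nat.
Proof. induction l as [|a l [N HN]]. exists O; intros t [].
  exists (Nat.max (f a) N). intros t [<-|Ht]. lia. specialize (HN t Ht). lia. Qed.

Lemma open_interval_set (lo hi : R) : open_set (fun y => lo < y < hi).
Proof. intros y Hy. assert (Hp : 0 < Rmin (y - lo) (hi - y)) by (apply Rmin_pos; lra).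
  exists (mkposreal _ Hp). intros z Hz. unfold disc in Hz; simpl in Hz.
  assert (Rmin (y - lo) (hi - y) <= y - lo) by apply Rmin_l.
  assert (Rmin (y - lo) (hi - y) <= hi - y) by apply Rmin_r.
  unfold Rabs in Hz; destruct Rcase_abs in Hz; lra. Qed.

Lemma open_set_ext (A B : R -> Prop) : (forall y, A y <-> B y) -> open_set A -> open_set B.
Proof. intros H HA y Hy. destruct (HA y (proj2 (H y) Hy)) as [d Hd]. exists d.
  intros z Hz. apply H, Hd, Hz. Qed.

Lemma open_set_empty : open_set (fun _ => False).
Proof. intros y []. Qed.

Lemma near_bound (p q : nat -> R) x N : exists rho, 0 < rho /\
  forall k, (k < N)%nat -> p k < x < q k -> forall x', Rabs (x' - x) < rho -> p k < x' < q k.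
Proof.
  induction N as [|N [rho [Hr H]]]. exists 1; split; [lra|intros; lia].
  destruct (classic (p N < x < q N)) as [Hin|Hout].
  - exists (Rmin rho (Rmin (x - p N) (q N - x))). split.
    repeat apply Rmin_pos; lra.
    intros k Hk Hk2 x' Hx'. assert (Rmin rho (Rmin (x - p N) (q N - x)) <= rho) by apply Rmin_l.
    assert (Rmin rho (Rmin (x - p N) (q N - x)) <= Rmin (x - p N) (q N - x)) by apply Rmin_r.
    assert (Rmin (x - p N) (q N - x) <= x - p N) by apply Rmin_l.
    assert (Rmin (x - p N) (q N - x) <= q N - x) by apply Rmin_r.
    destruct (Nat.eq_dec k N). subst. unfold Rabs in Hx'; destruct Rcase_abs in Hx'; lra.
    apply (H k); [lia|auto|lra].
  - exists rho. split; auto. intros k Hk Hk2 x' Hx'. destruct (Nat.eq_dec k N). subst; contradiction.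
    apply (H k); [lia|auto|auto].
Qed.

Lemma heine_borel a1 b1 a2 b2 (p q r s : nat -> R) :
  (forall x y, a1 <= x <= b1 -> a2 <= y <= b2 -> exists k, p k < x < q k /\ r k < y < s k) ->
  exists n, forall x y, a1 <= x <= b1 -> a2 <= y <= b2 ->
    exists k, (k < n)%nat /\ p k < x < q k /\ r k < y < s k.
Proof.
  intros Hcov.
  assert (Hslice : forall x, exists Nr : nat * R, a1 <= x <= b1 -> 0 < snd Nr /\
     forall x', Rabs (x' - x) < snd Nr -> forall y, a2 <= y <= b2 ->
        exists k, (k < fst Nr)%nat /\ p k < x' < q k /\ r k < y < s k).
  { intros x. destruct (classic (a1 <= x <= b1)) as [Hx|Hx]; [|exists (O, 1); intros; contradiction].
    destruct (compact_fin a2 b2 (fun t y => exists k, t = INR k /\ p k < x < q k /\ r k < y < s k))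
      as [l Hl].
    - intros t. destruct (classic (exists k, t = INR k /\ p k < x < q k)) as [[k [Hk1 Hk2]]|Hn].
      + apply (open_set_ext (fun y => r k < y < s k)); [|apply open_interval_set].
        intros y; split. intros Hy; exists k; auto. intros [k' [Hk' [? ?]]].
        subst. apply INR_eq in Hk'. subst. auto.
      + apply (open_set_ext (fun _ => False)); [|apply open_set_empty].
        intros y; split. intros []. intros [k [? [? ?]]]. apply Hn. exists k; auto.
    - intros y Hy. destruct (Hcov x y Hx Hy) as [k Hk]. exists (INR k), k. auto.
    - destruct (list_bound l) as [N HN]. destruct (near_bound p q x N) as [rho [Hr Hrho]].
      exists (N, rho). intros _. split; auto. simpl.
      intros x' Hx' y Hy. destruct (Hl y Hy) as [t [Ht [k [-> [Hk1 Hk2]]]]].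
      specialize (HN _ Ht). apply INR_lt in HN.
      exists k. refine (conj HN (conj _ Hk2)). apply (Hrho k); auto. }
  apply functional_choice in Hslice. destruct Hslice as [fN HfN].
  destruct (compact_fin a1 b1 (fun t x => (a1 <= t <= b1) /\ Rabs (x - t) < snd (fN t))) as [l Hl].
  - intros t. destruct (classic (a1 <= t <= b1)) as [Ht|Ht].
    + apply (open_set_ext (fun x => t - snd (fN t) < x < t + snd (fN t))); [|apply open_interval_set].
      intros x; split. intros; split; auto. unfold Rabs; destruct Rcase_abs; lra.
      intros [_ H]. unfold Rabs in H; destruct Rcase_abs in H; lra.
    + apply (open_set_ext (fun _ => False)); [|apply open_set_empty]. intros; tauto.
  - intros x Hx. exists x. split; auto. replace (x - x) with 0 by ring. rewrite Rabs_R0.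
    apply (HfN x Hx).
  - destruct (list_bound_nat l (fun t => fst (fN t))) as [N HN]. exists N.
    intros x y Hx Hy. destruct (Hl x Hx) as [t [Ht [Ht1 Ht2]]].
    destruct (proj2 (HfN t Ht1) x Ht2 y Hy) as [k [Hk1 Hk2]].
    exists k. split; auto. specialize (HN t Ht). lia.
Qed.

Lemma enlarge_area L1 L2 e : 0 <= L1 -> 0 <= L2 -> 0 < e ->
  let eta := Rmin 1 (e / (2 * L1 + 2 * L2 + 4)) in
  0 < eta /\ Rmax 0 (L1 + 2 * eta) * Rmax 0 (L2 + 2 * eta) <= L1 * L2 + e.
Proof. intros H1 H2 He eta.
  assert (Hp : 0 < e / (2 * L1 + 2 * L2 + 4)) by (apply Rdiv_lt_0_compat; lra).
  assert (Heta : 0 < eta) by (apply Rmin_pos; lra).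
  assert (eta <= 1) by apply Rmin_l.
  assert (Hb : eta <= e / (2 * L1 + 2 * L2 + 4)) by apply Rmin_r.
  assert (Hb2 : eta * (2 * L1 + 2 * L2 + 4) <= e).
  { apply (Rmult_le_compat_r (2 * L1 + 2 * L2 + 4)) in Hb; [|lra].
    replace (e / (2 * L1 + 2 * L2 + 4) * (2 * L1 + 2 * L2 + 4)) with e in Hb by (field; lra). lra. }
  split; auto. rewrite !Rmax_right by lra. nra.
Qed.

Lemma box_lower a1 b1 a2 b2 (c : nat -> rect) : a1 <= b1 -> a2 <= b2 ->
  (forall x y, a1 <= x <= b1 -> a2 <= y <= b2 -> exists k, in_rect (c k) x y) ->
  forall eps, 0 < eps -> exists n, (b1 - a1) * (b2 - a2) - eps < sum_f_R0 (fun k => area (c k)) n.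
Proof.
  intros H1 H2 Hc eps He.
  set (ek := fun k => eps / 2 / 2 ^ S k).
  assert (Hek : forall k, 0 < ek k) by (intros; apply Rdiv_lt_0_compat; [lra|apply pow_lt; lra]).
  set (L1 := fun k => Rmax 0 (rb1 (c k) - ra1 (c k))).
  set (L2 := fun k => Rmax 0 (rb2 (c k) - ra2 (c k))).
  set (eta := fun k => Rmin 1 (ek k / (2 * L1 k + 2 * L2 k + 4))).
  assert (Heta : forall k, 0 < eta k /\ Rmax 0 (L1 k + 2 * eta k) * Rmax 0 (L2 k + 2 * eta k) <= L1 k * L2 k + ek k).
  { intros k. apply enlarge_area; auto; apply Rmax_l. }
  destruct (heine_borel a1 b1 a2 b2 (fun k => ra1 (c k) - eta k) (fun k => rb1 (c k) + eta k)
              (fun k => ra2 (c k) - eta k) (fun k => rb2 (c k) + eta k)) as [n Hn].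
  { intros x y Hx Hy. destruct (Hc x y Hx Hy) as [k Hk]. exists k. unfold in_rect in Hk.
    destruct (Heta k) as [Hk1 _]. lra. }
  set (d := fun k => Rect (ra1 (c k) - eta k) (rb1 (c k) + eta k) (ra2 (c k) - eta k) (rb2 (c k) + eta k)).
  assert (Hfin : (b1 - a1) * (b2 - a2) <= rsum (fun k => area (d k)) n).
  { apply finite_cover_area; auto. intros x y Hx Hy. destruct (Hn x y Hx Hy) as [k [Hk Hin]].
    exists k. split; auto. unfold in_rect, d; simpl; lra. }
  assert (Hd : rsum (fun k => area (d k)) n <= rsum (fun k => area (c k)) n + eps / 2).
  { eapply Rle_trans. apply (rsum_le _ (fun k => area (c k) + ek k)).
    - intros k _. unfold area, d; simpl. destruct (Heta k) as [Hk1 Hk2].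
      eapply Rle_trans; [|exact Hk2]. unfold L1, L2.
      assert (forall u v, u <= v -> Rmax 0 u <= Rmax 0 v) as Hm by (intros; unfold Rmax; repeat destruct Rle_dec; lra).
      apply Rmult_le_compat; try apply Rmax_l; apply Hm; unfold Rmax; destruct Rle_dec; lra.
    - rewrite rsum_plus. pose proof (rsum_geom (eps / 2) n). unfold ek. lra. }
  destruct n as [|n]. { destruct (Hn a1 a2) as [k [Hk _]]; lra || lia. }
  exists n. rewrite sum_rsum. lra.
Qed.

Definition cc (z w : Cpx) : Cpx :=
  (fst z * fst w + snd z * snd w, fst z * snd w - snd z * fst w).
Definition th (z w : Cpx) : R := atan (snd (cc z w) / fst (cc z w)).

Lemma Cnorm_cc z w : Cnorm (cc z w) = Cnorm z * Cnorm w.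
Proof. unfold Cnorm. rewrite <- sqrt_mult.
  f_equal. unfold cc; simpl; ring.
  pose proof (pow2_ge_0 (fst z)); pose proof (pow2_ge_0 (snd z)); lra.
  pose proof (pow2_ge_0 (fst w)); pose proof (pow2_ge_0 (snd w)); lra. Qed.

Lemma atan_spec a b : 0 < a ->
  cos (atan (b / a)) * Cnorm (a, b) = a /\ sin (atan (b / a)) * Cnorm (a, b) = b.
Proof. intros Ha. rewrite cos_atan, sin_atan.
  assert (E : Cnorm (a, b) = a * sqrt (1 + (b / a)²)).
  { unfold Cnorm; cbn [fst snd]. replace (a ^ 2 + b ^ 2) with ((a * a) * (1 + (b / a)²)) by (unfold Rsqr; field; lra).
    rewrite sqrt_mult. rewrite sqrt_square by lra. reflexivity. nra. pose proof (Rle_0_sqr (b / a)). lra. }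
  assert (Hs : 0 < sqrt (1 + (b / a)²)).
  { apply sqrt_lt_R0. pose proof (Rle_0_sqr (b / a)). lra. }
  rewrite E. split; field; lra. Qed.

Lemma th_spec z w : 0 < fst (cc z w) ->
  cos (th z w) * (Cnorm z * Cnorm w) = fst (cc z w) /\
  sin (th z w) * (Cnorm z * Cnorm w) = snd (cc z w).
Proof. intros H. rewrite <- Cnorm_cc. unfold th. destruct (cc z w) as [a b]. apply atan_spec; auto. Qed.

Lemma Cnorm_opp a b : Cnorm (- a, - b) = Cnorm (a, b).
Proof. unfold Cnorm; simpl; f_equal; ring. Qed.
Lemma Cnorm_swap a b : Cnorm (b, a) = Cnorm (a, b).
Proof. unfold Cnorm; simpl; f_equal; ring. Qed.

Lemma abs_from_sq x y : 0 <= y -> x ^ 2 <= y ^ 2 -> Rabs x <= y.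
Proof. intros Hy H. apply le_from_sq; auto. rewrite pow2_abs. auto. Qed.

Lemma atan_lt_pi4 t : Rabs t < 1 -> Rabs (atan t) < PI / 4.
Proof. intros H. rewrite <- atan_1. unfold Rabs in *. destruct (Rcase_abs t).
  - assert (atan t < 0) by (rewrite <- atan_0; apply atan_increasing; lra).
    destruct Rcase_abs; [|lra]. rewrite <- atan_opp. apply atan_increasing; lra.
  - assert (0 <= atan t) by (destruct r; [rewrite <- atan_0; left; apply atan_increasing; lra|subst; rewrite atan_0; lra]).
    destruct Rcase_abs; [lra|]. apply atan_increasing; lra. Qed.

Lemma th_small D z w : 0 < D -> D <= Cnorm z -> Cnorm (Csub w z) <= D / 10 ->
  0 < fst (cc z w) /\ Rabs (th z w) < PI / 4.
Proof.
  intros HD Hz Hd. destruct z as [z1 z2], w as [w1 w2]. unfold Csub in Hd; simpl in Hd.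
  set (d1 := w1 - z1) in *. set (d2 := w2 - z2) in *.
  replace w1 with (z1 + d1) by (unfold d1; ring). replace w2 with (z2 + d2) by (unfold d2; ring).
  unfold th, cc; simpl.
  pose proof (Cnorm_sq (z1, z2)) as Sz0. pose proof (Cnorm_sq (d1, d2)) as Sd0. cbn [fst snd] in Sz0, Sd0.
  pose proof (Cnorm_ge0 (z1, z2)). pose proof (Cnorm_ge0 (d1, d2)).
  assert (C1 : Rabs (z1 * d1 + z2 * d2) <= Cnorm (z1, z2) * Cnorm (d1, d2)).
  { apply abs_from_sq. nra. rewrite Rpow_mult_distr, Sz0, Sd0.
    pose proof (pow2_ge_0 (z1 * d2 - z2 * d1)). nra. }
  assert (C2 : Rabs (z1 * d2 - z2 * d1) <= Cnorm (z1, z2) * Cnorm (d1, d2)).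
  { apply abs_from_sq. nra. rewrite Rpow_mult_distr, Sz0, Sd0.
    pose proof (pow2_ge_0 (z1 * d1 + z2 * d2)). nra. }
  pose proof (Cnorm_sq (z1, z2)) as Sz. simpl in Sz.
  set (nz := Cnorm (z1, z2)) in *. set (nd := Cnorm (d1, d2)) in *.
  apply abs_le_bnd in C1.
  assert (Hre : nz * nz - nz * nd <= z1 * (z1 + d1) + z2 * (z2 + d2)) by nra.
  assert (Hpos : 0 < nz * nz - nz * nd) by nra.
  split. lra. apply atan_lt_pi4.
  set (re := z1 * (z1 + d1) + z2 * (z2 + d2)) in *.
  set (im := z1 * (z2 + d2) - z2 * (z1 + d1)).
  assert (Him : Rabs im <= nz * nd).
  { unfold im. replace (z1 * (z2 + d2) - z2 * (z1 + d1)) with (z1 * d2 - z2 * d1) by ring. exact C2. }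
  unfold Rdiv. rewrite Rabs_mult, Rabs_inv, (Rabs_right re) by lra.
  apply (Rmult_lt_reg_r re); [lra|]. rewrite Rmult_assoc, Rinv_l, Rmult_1_r by lra.
  nra.
Qed.

Definition uu (t : R) : Cpx := (cos t, sin t).
Definition cj (z : Cpx) : Cpx := (fst z, - snd z).
Definition sc (r : R) (z : Cpx) : Cpx := (r * fst z, r * snd z).

Lemma uu_add x y : Cmul (uu x) (uu y) = uu (x + y).
Proof. unfold uu, Cmul; simpl. rewrite cos_plus, sin_plus. f_equal; ring. Qed.
Lemma uu_sub x y : Cmul (uu x) (cj (uu y)) = uu (x - y).
Proof. unfold uu, cj, Cmul; simpl. rewrite cos_minus, sin_minus. f_equal; ring. Qed.

Definition spec t z w := sc (Cnorm z * Cnorm w) (uu t) = cc z w.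

Lemma th_spec' z w : 0 < fst (cc z w) -> spec (th z w) z w.
Proof. intros H. destruct (th_spec z w H) as [H1 H2]. unfold spec, sc, uu; simpl.
  rewrite (Rmult_comm _ (cos _)), (Rmult_comm _ (sin _)), H1, H2. destruct (cc z w); reflexivity. Qed.

Lemma prod4_scale n1 n2 n3 n4 z1 z2 z3 z4 :
  Cmul (Cmul (Cmul (sc n1 z1) (sc n2 z2)) (cj (sc n3 z3))) (cj (sc n4 z4)) =
  sc (n1 * n2 * n3 * n4) (Cmul (Cmul (Cmul z1 z2) (cj z3)) (cj z4)).
Proof. destruct z1, z2, z3, z4. unfold Cmul, sc, cj; simpl. f_equal; ring. Qed.

Lemma prod4_cc a b c d :
  Cmul (Cmul (Cmul (cc a b) (cc b c)) (cj (cc d c))) (cj (cc a d)) =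
  ((fst a ^ 2 + snd a ^ 2) * (fst b ^ 2 + snd b ^ 2) * (fst c ^ 2 + snd c ^ 2) * (fst d ^ 2 + snd d ^ 2), 0).
Proof. destruct a, b, c, d. unfold Cmul, cc, cj; simpl. f_equal; ring. Qed.

Lemma cos_kpi_1 (k : Z) : Rabs (IZR k * PI) < 2 * PI -> cos (IZR k * PI) = 1 -> k = 0%Z.
Proof. intros H Hc. pose proof PI_RGT_0.
  assert (Hk : (-2 < k < 2)%Z).
  { rewrite Rabs_mult, (Rabs_right PI) in H by lra.
    assert (Rabs (IZR k) < 2) by nra. rewrite <- abs_IZR in H1. apply lt_IZR in H1. lia. }
  assert (Hk3 : (k = -1 \/ k = 0 \/ k = 1)%Z) by lia. destruct Hk3 as [Hk3|[Hk3|Hk3]]; subst k; auto.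
  - replace (IZR (-1) * PI) with (- PI) in Hc by (simpl; ring). rewrite cos_neg, cos_PI in Hc. lra.
  - replace (IZR 1 * PI) with PI in Hc by (simpl; ring). rewrite cos_PI in Hc. lra.
Qed.

Lemma cell_zero (a b c d : Cpx) t1 t2 t3 t4 :
  0 < Cnorm a -> 0 < Cnorm b -> 0 < Cnorm c -> 0 < Cnorm d ->
  spec t1 a b -> spec t2 b c -> spec t3 d c -> spec t4 a d ->
  Rabs (t1 + t2 - t3 - t4) < 2 * PI -> t1 + t2 - t3 - t4 = 0.
Proof.
  intros Ha Hb Hc Hd S1 S2 S3 S4 Hs.
  pose proof (prod4_scale (Cnorm a * Cnorm b) (Cnorm b * Cnorm c) (Cnorm d * Cnorm c) (Cnorm a * Cnorm d)
                (uu t1) (uu t2) (uu t3) (uu t4)) as E.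
  unfold spec in *. rewrite S1, S2, S3, S4, prod4_cc, uu_add, uu_sub, uu_sub in E.
  rewrite <- (Cnorm_sq a), <- (Cnorm_sq b), <- (Cnorm_sq c), <- (Cnorm_sq d) in E.
  unfold sc, uu in E. injection E as E1 E2. simpl in E1, E2.
  set (P := Cnorm a * Cnorm b * (Cnorm b * Cnorm c) * (Cnorm d * Cnorm c) * (Cnorm a * Cnorm d)) in *.
  assert (HP : 0 < P) by (unfold P; repeat apply Rmult_lt_0_compat; auto).
  assert (Hcos : cos (t1 + t2 - t3 - t4) = 1).
  { apply (Rmult_eq_reg_l P); [|lra].
    assert (EP : P = Cnorm a * (Cnorm a * 1) * (Cnorm b * (Cnorm b * 1)) * (Cnorm c * (Cnorm c * 1)) * (Cnorm d * (Cnorm d * 1))) by (unfold P; ring).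
    lra. }
  assert (Hsin : sin (t1 + t2 - t3 - t4) = 0).
  { apply (Rmult_eq_reg_l P); [|lra]. lra. }
  destruct (sin_eq_0_0 _ Hsin) as [k Hk]. rewrite Hk in *.
  rewrite (cos_kpi_1 k Hs Hcos). simpl. ring.
Qed.

Lemma Cnorm_rot al z : Cnorm (Cmul (uu al) z) = Cnorm z.
Proof. unfold Cnorm, Cmul, uu; cbn [fst snd]. f_equal. pose proof (sin2_cos2 al). unfold Rsqr in H.
  replace ((cos al * fst z - sin al * snd z) ^ 2 + (cos al * snd z + sin al * fst z) ^ 2)
    with ((sin al * sin al + cos al * cos al) * (fst z ^ 2 + snd z ^ 2)) by ring.
  rewrite H. ring. Qed.

Lemma cc_rot al be z w : cc (Cmul (uu al) z) (Cmul (uu be) w) = Cmul (uu (be - al)) (cc z w).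
Proof. destruct z, w. unfold cc, Cmul, uu; simpl. rewrite cos_minus, sin_minus. f_equal; ring. Qed.

Lemma spec_rot t z w al be : spec t z w ->
  spec (be - al + t) (Cmul (uu al) z) (Cmul (uu be) w).
Proof. unfold spec. intros H. rewrite !Cnorm_rot, cc_rot, <- H, <- uu_add.
  unfold sc, Cmul, uu; simpl. f_equal; ring. Qed.

Lemma rsum_shift a n : rsum (fun i => a (S i)) n = rsum a n + a n - a O.
Proof. induction n; simpl; lra. Qed.

Lemma rsum_minus f g n : rsum (fun i => f i - g i) n = rsum f n - rsum g n.
Proof. induction n; simpl; lra. Qed.

Lemma grid_lemma (G : R -> R -> Cpx) (D : R) (K N : nat) (x y : R) :
  0 < D -> (8 <= K)%nat -> (8 <= N)%nat -> quasi_periodic G ->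
  (forall j l, (j < K)%nat -> (l < N)%nat -> D <= Cnorm (G (x + INR j / INR K) (y + INR l / INR N))) ->
  exists j l, (j < K)%nat /\ (l < N)%nat /\
   (Cnorm (Csub (G (x + INR j / INR K + 1 / INR K) (y + INR l / INR N))
                (G (x + INR j / INR K) (y + INR l / INR N))) > D / 10 \/
    Cnorm (Csub (G (x + INR j / INR K) (y + INR l / INR N + 1 / INR N))
                (G (x + INR j / INR K) (y + INR l / INR N))) > D / 10).
Proof.
  intros HD HK HN HQ Hbig. apply NNPP. intros Hcon.
  assert (Hsm : forall j l, (j < K)%nat -> (l < N)%nat ->
     Cnorm (Csub (G (x + INR j / INR K + 1 / INR K) (y + INR l / INR N))
                (G (x + INR j / INR K) (y + INR l / INR N))) <= D / 10 /\
     Cnorm (Csub (G (x + INR j / INR K) (y + INR l / INR N + 1 / INR N))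
                (G (x + INR j / INR K) (y + INR l / INR N))) <= D / 10).
  { intros j l Hj Hl. split; apply Rnot_lt_le; intros Hc; apply Hcon; exists j, l; auto. }
  clear Hcon.
  assert (HK0 : 0 < INR K) by (apply lt_0_INR; lia).
  assert (HN0 : 0 < INR N) by (apply lt_0_INR; lia).
  set (g := fun j l => G (x + INR j / INR K) (y + INR l / INR N)).
  assert (gS1 : forall j l, G (x + INR j / INR K + 1 / INR K) (y + INR l / INR N) = g (S j) l).
  { intros. unfold g. rewrite S_INR. f_equal. field. lra. }
  assert (gS2 : forall j l, G (x + INR j / INR K) (y + INR l / INR N + 1 / INR N) = g j (S l)).
  { intros. unfold g. rewrite S_INR. f_equal. field. lra. }
  assert (small : forall j l, (j < K)%nat -> (l < N)%nat ->
     D <= Cnorm (g j l) /\ Cnorm (Csub (g (S j) l) (g j l)) <= D / 10 /\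
     Cnorm (Csub (g j (S l)) (g j l)) <= D / 10).
  { intros j l Hj Hl. destruct (Hsm j l Hj Hl) as [H1 H2]. rewrite gS1 in H1. rewrite gS2 in H2.
    split; [apply Hbig; auto|auto]. }
  clear Hsm gS1 gS2.
  assert (gK : forall l, g K l = Cmul (uu (2 * PI * (y + INR l / INR N))) (g O l)).
  { intros l. unfold g. replace (x + INR K / INR K) with (x + 1) by (field; lra).
    replace (x + INR 0 / INR K) with x by (simpl; field; lra). apply HQ. }
  assert (gN : forall j, g j N = g j O).
  { intros j. unfold g. replace (y + INR N / INR N) with (y + 1) by (field; lra).
    replace (y + INR 0 / INR N) with y by (simpl; field; lra). apply HQ. }
  assert (Npos : forall j l, (j <= K)%nat -> (l <= N)%nat -> 0 < Cnorm (g j l)).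
  { assert (H0 : forall j l, (j <= K)%nat -> (l < N)%nat -> 0 < Cnorm (g j l)).
    { intros j l Hj Hl. destruct (Nat.eq_dec j K).
      - subst. rewrite gK, Cnorm_rot. destruct (small O l); lia || lra.
      - destruct (small j l); lia || lra. }
    intros j l Hj Hl. destruct (Nat.eq_dec l N). subst. rewrite gN. apply H0; lia. apply H0; lia. }
  set (hh := fun j l => th (g j l) (g (S j) l)).
  set (vv := fun j l => if Nat.eq_dec j K then 2 * PI / INR N + th (g O l) (g O (S l))
                        else th (g j l) (g j (S l))).
  assert (Hpi : 2 * PI / INR N <= PI / 4).
  { pose proof PI_RGT_0. assert (8 <= INR N) by (replace 8 with (INR 8) by (simpl; ring); apply le_INR; auto).
    unfold Rdiv. apply (Rmult_le_reg_r (INR N)); auto. rewrite Rmult_assoc, Rinv_l by lra. nra. }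
  assert (Sh : forall j l, (j < K)%nat -> (l <= N)%nat ->
     spec (hh j l) (g j l) (g (S j) l) /\ Rabs (hh j l) < PI / 4).
  { assert (H0 : forall j l, (j < K)%nat -> (l < N)%nat ->
       spec (hh j l) (g j l) (g (S j) l) /\ Rabs (hh j l) < PI / 4).
    { intros j l Hj Hl. destruct (small j l Hj Hl) as [H1 [H2 H3]].
      destruct (th_small D (g j l) (g (S j) l) HD H1 H2). split; auto. apply th_spec'; auto. }
    intros j l Hj Hl. destruct (Nat.eq_dec l N). subst. unfold hh. rewrite !gN. apply H0; lia. apply H0; lia. }
  assert (Sv : forall j l, (j <= K)%nat -> (l < N)%nat ->
     spec (vv j l) (g j l) (g j (S l)) /\ Rabs (vv j l) < PI / 2).
  { intros j l Hj Hl. destruct (small O l ltac:(lia) Hl) as [H1 [H2 H3]].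
    destruct (th_small D (g O l) (g O (S l)) HD H1 H3) as [H4 H5].
    unfold vv. destruct (Nat.eq_dec j K).
    - subst. rewrite !gK. split.
      + replace (2 * PI / INR N) with (2 * PI * (y + INR (S l) / INR N) - 2 * PI * (y + INR l / INR N))
          by (rewrite S_INR; field; lra).
        apply spec_rot, th_spec'; auto.
      + pose proof PI_RGT_0. assert (0 < 2 * PI / INR N) by (apply Rdiv_lt_0_compat; lra).
        unfold Rabs in *. repeat destruct Rcase_abs; lra.
    - destruct (small j l ltac:(lia) Hl) as [H6 [H7 H8]].
      destruct (th_small D (g j l) (g j (S l)) HD H6 H8) as [H9 H10].
      split. apply th_spec'; auto. pose proof PI_RGT_0. lra. }
  assert (Hcell : forall j l, (j < K)%nat -> (l < N)%nat ->
     hh j l + vv (S j) l - hh j (S l) - vv j l = 0).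
  { intros j l Hj Hl. destruct (Sh j l Hj ltac:(lia)) as [A1 B1].
    destruct (Sv (S j) l ltac:(lia) Hl) as [A2 B2]. destruct (Sh j (S l) Hj ltac:(lia)) as [A3 B3].
    destruct (Sv j l ltac:(lia) Hl) as [A4 B4].
    apply (cell_zero (g j l) (g (S j) l) (g (S j) (S l)) (g j (S l))); auto; try (apply Npos; lia).
    pose proof PI_RGT_0. unfold Rabs in *. repeat destruct Rcase_abs; lra. }
  assert (Hrow : forall l, (l < N)%nat -> 0 =
     rsum (fun j => hh j l) K - rsum (fun j => hh j (S l)) K + 2 * PI / INR N).
  { intros l Hl.
    assert (E : rsum (fun j => hh j l + vv (S j) l - hh j (S l) - vv j l) K = 0).
    { rewrite (rsum_ext _ (fun _ => 0)). rewrite rsum_const; ring. intros; apply Hcell; auto. }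
    rewrite (rsum_ext _ (fun j => (hh j l - hh j (S l)) + (vv (S j) l - vv j l))) in E by (intros; ring).
    rewrite rsum_plus, rsum_minus, (rsum_tele (fun j => vv j l)) in E.
    unfold vv at 1 2 in E. destruct (Nat.eq_dec K K); [|lia]. destruct (Nat.eq_dec 0 K); [lia|]. lra. }
  assert (Htot : rsum (fun l => rsum (fun j => hh j l) K - rsum (fun j => hh j (S l)) K + 2 * PI / INR N) N = 0).
  { rewrite (rsum_ext _ (fun _ => 0)). rewrite rsum_const; ring. intros; symmetry; apply Hrow; auto. }
  rewrite rsum_plus, rsum_const, rsum_minus in Htot.
  rewrite (rsum_shift (fun l => rsum (fun j => hh j l) K)) in Htot.
  assert (EN : rsum (fun j => hh j N) K = rsum (fun j => hh j O) K).
  { apply rsum_ext. intros j Hj. unfold hh. rewrite !gN. reflexivity. }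
  rewrite EN in Htot. replace (INR N * (2 * PI / INR N)) with (2 * PI) in Htot by (field; lra).
  pose proof PI_RGT_0. lra.
Qed.

Definition clip (r t : rect) : rect :=
  Rect (Rmax (ra1 r) (ra1 t)) (Rmin (rb1 r) (rb1 t)) (Rmax (ra2 r) (ra2 t)) (Rmin (rb2 r) (rb2 t)).

Lemma in_clip r t x y : in_rect r x y -> in_rect t x y -> in_rect (clip r t) x y.
Proof. unfold in_rect, clip; simpl. intros. unfold Rmax, Rmin; repeat destruct Rle_dec; lra. Qed.

Lemma len_partition (a b : R) (t : nat -> R) n : (forall j, t j <= t (S j)) ->
  rsum (fun j => Rmax 0 (Rmin b (t (S j)) - Rmax a (t j))) n <= Rmax 0 (Rmin b (t n) - Rmax a (t O)).
Proof. intros Ht. assert (Hm : forall n, t O <= t n).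
  { induction n0; [lra|]. specialize (Ht n0). lra. }
  induction n. simpl. apply Rmax_l.
  cbn [rsum]. specialize (Hm n). specialize (Ht n).
  eapply Rle_trans. apply Rplus_le_compat_r, IHn.
  unfold Rmax, Rmin; repeat destruct Rle_dec; lra. Qed.

Definition tile (K N j l : nat) : rect :=
  Rect (INR j / INR K) (INR (S j) / INR K) (INR l / INR N) (INR (S l) / INR N).

Lemma tiles_area (K N : nat) r : (0 < K)%nat -> (0 < N)%nat ->
  rsum (fun j => rsum (fun l => area (clip r (tile K N j l))) N) K <= area r.
Proof. intros HK HN.
  assert (HK0 : 0 < INR K) by (apply lt_0_INR; lia). assert (HN0 : 0 < INR N) by (apply lt_0_INR; lia).
  set (t1 := fun j => INR j / INR K). set (t2 := fun l => INR l / INR N).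
  assert (Ht1 : forall j, t1 j <= t1 (S j)).
  { intros; unfold t1, Rdiv; apply Rmult_le_compat_r; [left; apply Rinv_0_lt_compat; auto|rewrite S_INR; lra]. }
  assert (Ht2 : forall j, t2 j <= t2 (S j)).
  { intros; unfold t2, Rdiv; apply Rmult_le_compat_r; [left; apply Rinv_0_lt_compat; auto|rewrite S_INR; lra]. }
  unfold area, clip, tile; simpl.
  rewrite (rsum_ext _ (fun j => Rmax 0 (Rmin (rb1 r) (t1 (S j)) - Rmax (ra1 r) (t1 j)) *
      rsum (fun l => Rmax 0 (Rmin (rb2 r) (t2 (S l)) - Rmax (ra2 r) (t2 l))) N)).
  2:{ intros j _. rewrite <- rsum_scal. reflexivity. }
  rewrite rsum_mul_r. apply Rmult_le_compat.
  apply rsum_ge0; intros; apply Rmax_l. apply rsum_ge0; intros; apply Rmax_l.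
  - eapply Rle_trans. apply len_partition; auto.
    unfold Rmax, Rmin; repeat destruct Rle_dec; lra.
  - eapply Rle_trans. apply len_partition; auto.
    unfold Rmax, Rmin; repeat destruct Rle_dec; lra.
Qed.

Lemma rsum_cut F K n : (forall i, (K <= i)%nat -> F i = 0) -> (forall i, 0 <= F i) -> rsum F n <= rsum F K.
Proof. intros H0 Hp. destruct (Nat.le_gt_cases n K). apply rsum_mono; auto.
  induction H; cbn [rsum]; rewrite H0 by lia; lra. Qed.

Lemma rsum_front f n : rsum f (S n) = f O + rsum (fun i => f (S i)) n.
Proof. rewrite rsum_shift. simpl. ring. Qed.

Theorem lemma3 :
  forall D : R, 0 < D ->
  exists delta : R, 0 < delta /\
  forall (K N : nat), (8 <= K)%nat -> (8 <= N)%nat ->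
  forall G : R -> R -> Cpx,
    measurable_fun G -> quasi_periodic G ->
    null_set (fun x y => Cnorm (G x y) < D) ->
    exists S : set2,
      measurable2 S /\
      (forall x y, S x y -> 0 <= x <= 1 /\ 0 <= y <= 1) /\
      outer_ge S (1 / (INR N * INR K)) /\
      (forall x y, S x y ->
         Cnorm (Csub (G (x + 1 / INR K) y) (G x y)) >= delta \/
         Cnorm (Csub (G x (y + 1 / INR N)) (G x y)) >= delta).
Proof.
  intros D HD. exists (D / 10). split; [lra|].
  intros K N HK HN G HGm HQ Hnull.
  assert (HK0 : 0 < INR K) by (apply lt_0_INR; lia).
  assert (HN0 : 0 < INR N) by (apply lt_0_INR; lia).
  assert (HK1 : 1 <= INR K) by (replace 1 with (INR 1) by reflexivity; apply le_INR; lia).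
  assert (HN1 : 1 <= INR N) by (replace 1 with (INR 1) by reflexivity; apply le_INR; lia).
  set (Sset := fun x y => Q01 x y /\ (Cnorm (Csub (G (x + 1 / INR K) y) (G x y)) > D / 10 \/
                               Cnorm (Csub (G x (y + 1 / INR N)) (G x y)) > D / 10)).
  exists Sset. split; [|split; [|split]].
  - apply (meas_inter2 Q01 (fun x y => Cnorm (Csub (G (x + 1 / INR K) y) (G x y)) > D / 10 \/
                               Cnorm (Csub (G x (y + 1 / INR N)) (G x y)) > D / 10)).
    apply meas_Q01. apply meas_union2.
    + refine (meas_ext _ _ _ (Dset_meas G (1 / INR K) 0 (D/10) HGm)). intros x y. rewrite Rplus_0_r. tauto.
    + refine (meas_ext _ _ _ (Dset_meas G 0 (1 / INR N) (D/10) HGm)). intros x y. rewrite Rplus_0_r. tauto.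
  - intros x y [[H1 H2] _]. lra.
  - intros c Hc eps He. apply NNPP. intros Hneg.
    set (v := 1 / (INR N * INR K)) in *.
    assert (Hs : forall n, sum_f_R0 (fun k => area (c k)) n <= v - eps).
    { intros n. apply Rnot_lt_le. intros Hl. apply Hneg. exists n. lra. }
    assert (Hv : 0 <= v - eps) by (pose proof (Hs O); simpl in *; pose proof (area_ge0 (c O)); lra).
    set (e := eps / 4).
    assert (He0 : 0 < e) by (unfold e; lra).
    set (bad := fun x y : R => exists j l : nat, (j < K)%nat /\ (l < N)%nat /\ Cnorm (G (x + INR j / INR K) (y + INR l / INR N)) < D).
    assert (Hbad : outer_le bad e).
    { eapply outer_le_mono.
      2:{ apply (outer_le_Union (fun n x y => Cnorm (G (x + INR (fst (of_nat n)) / INR K)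
                                                      (y + INR (snd (of_nat n)) / INR N)) < D)
                                (fun n => e / 2 ^ S n)).
          - intros n. eapply outer_le_weaken.
            apply (outer_le_shift (fun x y => Cnorm (G x y) < D)). exact Hnull.
            apply Rlt_le, Rdiv_lt_0_compat; [lra|apply pow_lt; lra].
          - intros M. apply rsum_geom. lra. }
      intros x y [j [l [_ [_ H]]]]. exists (to_nat (j, l)). rewrite cancel_of_to. simpl. exact H. }
    destruct (Hbad e He0) as [cb [Hcb Hcbs]].
    set (eta := Rmin (e / 4) (1 / (2 * INR K * INR N))).
    assert (Heta0 : 0 < eta) by (apply Rmin_pos; [lra|apply Rdiv_lt_0_compat; nra]).
    assert (Heta1 : eta <= e / 4) by apply Rmin_l.
    assert (Heta2 : eta <= 1 / (2 * INR K * INR N)) by apply Rmin_r.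
    assert (HetaK : eta < 1 / INR K).
    { eapply Rle_lt_trans; [exact Heta2|]. apply Rmult_lt_reg_r with (2 * INR K * INR N). nra.
      replace (1 / (2 * INR K * INR N) * (2 * INR K * INR N)) with 1 by (field; lra).
      replace (1 / INR K * (2 * INR K * INR N)) with (2 * INR N) by (field; lra). lra. }
    assert (HetaN : eta < 1 / INR N).
    { eapply Rle_lt_trans; [exact Heta2|]. apply Rmult_lt_reg_r with (2 * INR K * INR N). nra.
      replace (1 / (2 * INR K * INR N) * (2 * INR K * INR N)) with 1 by (field; lra).
      replace (1 / INR N * (2 * INR K * INR N)) with (2 * INR K) by (field; lra). lra. }
    set (bK := 1 / INR K - eta). set (bN := 1 / INR N - eta).
    set (d := fun i m => match i with
                         | O => cb m
                         | S n => if (Nat.ltb (fst (of_nat n)) K && Nat.ltb (snd (of_nat n)) N)%bool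
                                  then shiftr (INR (fst (of_nat n)) / INR K) (INR (snd (of_nat n)) / INR N)
                                         (clip (c m) (tile K N (fst (of_nat n)) (snd (of_nat n))))
                                  else emptyr
                         end).
    assert (Hcov : forall x y, 0 <= x <= bK -> 0 <= y <= bN -> exists k, in_rect (combine d k) x y).
    { intros x y Hx Hy. destruct (classic (bad x y)) as [Hb|Hb].
      - destruct (Hcb x y Hb) as [m Hm]. exists (to_nat (O, m)). unfold combine. rewrite cancel_of_to. exact Hm.
      - destruct (grid_lemma G D K N x y HD HK HN HQ) as [j [l [Hj [Hl Hdiff]]]].
        { intros j l Hj Hl. apply Rnot_lt_le. intros Hlt. apply Hb. exists j, l. auto. }
        assert (Hq1 : INR j / INR K <= x + INR j / INR K <= INR (S j) / INR K /\ x + INR j / INR K < 1).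
        { rewrite S_INR. assert (INR j + 1 <= INR K) by (rewrite <- S_INR; apply le_INR; lia).
          unfold bK in *. replace ((INR j + 1) / INR K) with (INR j / INR K + 1 / INR K) by (field; lra).
          assert (INR j / INR K + 1 / INR K <= 1).
          { replace (INR j / INR K + 1 / INR K) with ((INR j + 1) / INR K) by (field; lra).
            apply (Rmult_le_reg_r (INR K)); auto. replace ((INR j + 1) / INR K * INR K) with (INR j + 1) by (field; lra). lra. }
          lra. }
        assert (Hq2 : INR l / INR N <= y + INR l / INR N <= INR (S l) / INR N /\ y + INR l / INR N < 1).
        { rewrite S_INR. assert (INR l + 1 <= INR N) by (rewrite <- S_INR; apply le_INR; lia).
          unfold bN in *. replace ((INR l + 1) / INR N) with (INR l / INR N + 1 / INR N) by (field; lra).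
          assert (INR l / INR N + 1 / INR N <= 1).
          { replace (INR l / INR N + 1 / INR N) with ((INR l + 1) / INR N) by (field; lra).
            apply (Rmult_le_reg_r (INR N)); auto. replace ((INR l + 1) / INR N * INR N) with (INR l + 1) by (field; lra). lra. }
          lra. }
        assert (H0j : 0 <= INR j / INR K) by (apply Rmult_le_pos; [apply pos_INR|left; apply Rinv_0_lt_compat; lra]).
        assert (H0l : 0 <= INR l / INR N) by (apply Rmult_le_pos; [apply pos_INR|left; apply Rinv_0_lt_compat; lra]).
        assert (HS : Sset (x + INR j / INR K) (y + INR l / INR N)).
        { split. unfold Q01. lra. exact Hdiff. }
        destruct (Hc _ _ HS) as [m Hm].
        exists (to_nat (S (to_nat (j, l)), m)). unfold combine, d. rewrite cancel_of_to. cbn [fst snd].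
        rewrite cancel_of_to. cbn [fst snd].
        replace (Nat.ltb j K) with true by (symmetry; apply Nat.ltb_lt; auto).
        replace (Nat.ltb l N) with true by (symmetry; apply Nat.ltb_lt; auto). simpl andb. cbv iota.
        assert (Ht : in_rect (tile K N j l) (x + INR j / INR K) (y + INR l / INR N)).
        { unfold in_rect, tile; cbn [ra1 rb1 ra2 rb2]. lra. }
        pose proof (in_clip _ _ _ _ Hm Ht) as Hcl. unfold in_rect, shiftr in *. simpl ra1 in *.
        simpl rb1 in *; simpl ra2 in *; simpl rb2 in *. lra. }
    assert (Hsum : forall M, rsum (fun i => rsum (fun m => area (d i m)) M) M <= 2 * e + (v - eps)).
    { assert (Hin : forall m M, rsum (fun n => area (d (S n) m)) M <= area (c m)).
      { intros m M.
        set (F := fun p : nat * nat => if (Nat.ltb (fst p) K && Nat.ltb (snd p) N)%bool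
                    then area (clip (c m) (tile K N (fst p) (snd p))) else 0).
        assert (HF : forall p, 0 <= F p).
        { intros p. unfold F. destruct (_ && _)%bool; [apply area_ge0|lra]. }
        rewrite (rsum_ext _ (fun n => F (of_nat n))).
        2:{ intros n _. unfold d, F. destruct (_ && _)%bool. apply area_shiftr. apply area_emptyr. }
        eapply Rle_trans. apply cantor_reindex; auto.
        eapply Rle_trans. apply (rsum_cut _ K).
        { intros i Hi. rewrite (rsum_ext _ (fun _ => 0)). rewrite rsum_const; ring.
          intros j _. unfold F. cbn [fst snd]. replace (Nat.ltb i K) with false by (symmetry; apply Nat.ltb_ge; auto).
          reflexivity. }
        { intros i. apply rsum_ge0; auto. }
        eapply Rle_trans. apply (rsum_le _ (fun i => rsum (fun j => F (i, j)) N)).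
        { intros i Hi. apply (rsum_cut _ N); auto.
          intros j Hj. unfold F. cbn [fst snd]. replace (Nat.ltb j N) with false by (symmetry; apply Nat.ltb_ge; auto).
          rewrite Bool.andb_false_r. reflexivity. }
        rewrite (rsum_ext _ (fun i => rsum (fun j => area (clip (c m) (tile K N i j))) N)).
        2:{ intros i Hi. apply rsum_ext. intros j Hj. unfold F. cbn [fst snd].
            replace (Nat.ltb i K) with true by (symmetry; apply Nat.ltb_lt; auto).
            replace (Nat.ltb j N) with true by (symmetry; apply Nat.ltb_lt; auto). reflexivity. }
        apply tiles_area; lia. }
      intros M. destruct M as [|M]. simpl. lra.
      rewrite rsum_front. rewrite rsum_swap.
      assert (T0 : rsum (fun m => area (d O m)) (S M) <= 2 * e).
      { simpl d. rewrite <- sum_rsum. specialize (Hcbs M). lra. }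
      assert (T1 : rsum (fun m => rsum (fun n => area (d (S n) m)) M) (S M) <= v - eps).
      { eapply Rle_trans. apply (rsum_le _ (fun m => area (c m))). intros; apply Hin.
        rewrite <- sum_rsum. apply Hs. }
      lra. }
    destruct (box_lower 0 bK 0 bN (combine d) ltac:(unfold bK; lra) ltac:(unfold bN; lra) Hcov e He0) as [n Hn].
    rewrite sum_rsum in Hn. pose proof (combine_sum d _ Hsum (S n)) as Hc2.
    assert (Harea : v - e / 2 <= (bK - 0) * (bN - 0)).
    { unfold bK, bN, v. replace ((1 / INR K - eta - 0) * (1 / INR N - eta - 0)) with
        (1 / (INR N * INR K) - eta * (1 / INR K + 1 / INR N) + eta * eta) by (field; lra).
      assert (1 / INR K <= 1). { apply (Rmult_le_reg_r (INR K)); auto. replace (1 / INR K * INR K) with 1 by (field; lra). lra. }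
      assert (1 / INR N <= 1). { apply (Rmult_le_reg_r (INR N)); auto. replace (1 / INR N * INR N) with 1 by (field; lra). lra. }
      nra. }
    unfold e in *. lra.
  - intros x y [_ [H|H]]; [left|right]; lra.
Qed.
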